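(* Let $n\geq 3$. An $(n,3,3,3)$ Gog (resp. GOGAm) pentagon is the array $(X_{i,j})_{3\geq i\geq j\geq 1}$ formed by the bottom three rows of some Gog (resp. GOGAm) triangle of size $n$. There is a bijection between the set of $(n,3,3,3)$ Gog pentagons and the set of $(n,3,3,3)$ GOGAm pentagons; in particular they are equinumerous.
   Context: A Gelfand–Tsetlin triangle of size $n$ is an array $X=(X_{i,j})_{n\geq i\geq j\geq 1}$ of positive integers (row $n$ is the top row, row $1$ the bottom) with $X_{i+1,j}\leq X_{i,j}\leq X_{i+1,j+1}$ for all $n-1\geq i\geq j\geq 1$. A Gog triangle of size $n$ is a Gelfand–Tsetlin triangle with strictly increasing rows and top row $X_{n,j}=j$, $1\leq j\leq n$. A Magog triangle of size $n$ is a Gelfand–Tsetlin triangle with $X_{j,j}\leq j$ for all $j$. For $1\leq k\leq n-1$, the involution $s_k$ on Gelfand–Tsetlin triangles of size $n$ changes only row $k$, replacing each $X_{k,j}$ by $\max(X_{k+1,j},X_{k-1,j-1})+\min(X_{k+1,j+1},X_{k-1,j})-X_{k,j}$, where any term referring to an entry outside the triangle is omitted. Put $\omega_j=s_j\circ\cdots\circ s_1$ and $S=\omega_1\circ\omega_2\circ\cdots\circ\omega_{n-1}$. A GOGAm triangle of size $n$ is a Gelfand–Tsetlin triangle $X$ with $S(X)$ a Magog triangle. (Equivalently, by a known result, $X_{n,n}\leq n$ and for all $1\leq k\leq n-1$ and all $n=j_0>\dots>j_{n-k}\geq 1$: $\sum_{i=0}^{n-k-1}(X_{j_i+i,j_i}-X_{j_{i+1}+i,j_{i+1}})+X_{j_{n-k}+n-k,j_{n-k}}\leq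 k$.) *)

(* Defs.v *)
From mathcomp Require Import all_boot.
Set Implicit Arguments. Unset Strict Implicit. Unset Printing Implicit Defensive.

(* A triangle is a function X : nat -> nat -> nat; X i j is the entry X_{i,j};
   only the entries with n >= i >= j >= 1 are meaningful. *)
Definition triangle := nat -> nat -> nat.

Definition GT (n : nat) (X : triangle) : Prop :=
  (forall i j, 1 <= j -> j <= i -> i <= n -> 0 < X i j) /\
  (forall i j, 1 <= j -> j <= i -> i < n ->
     X i.+1 j <= X i j /\ X i j <= X i.+1 j.+1).

Definition Gog (n : nat) (X : triangle) : Prop :=
  GT n X /\
  (forall i j, 1 <= j -> j < i -> i <= n -> X i j < X i j.+1) /\
  (forall j, 1 <= j -> j <= n -> X n j = j).

Definition Magog (n : nat) (X : triangle) : Prop :=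
  GT n X /\ (forall j, 1 <= j -> j <= n -> X j j <= j).

(* The involution s_k (changes only row k); terms referring to entries
   outside the triangle are omitted.  For k <= n-1, the entries
   X_{k+1,j}, X_{k+1,j+1} always exist; X_{k-1,j-1} exists iff j >= 2;
   X_{k-1,j} exists iff j <= k-1. *)
Definition s_op (k : nat) (X : triangle) : triangle :=
  fun i j =>
    if (i == k) && (1 <= j <= k) then
      let lo := if 2 <= j then maxn (X k.+1 j) (X k.-1 j.-1) else X k.+1 j in
      let hi := if j < k then minn (X k.+1 j.+1) (X k.-1 j) else X k.+1 j.+1 in
      lo + hi - X k j
    else X i j.

Fixpoint omega (j : nat) (X : triangle) : triangle :=
  match j with
  | 0 => X
  | j'.+1 => s_op j'.+1 (omega j' X)
  end.

Definition S_op (n : nat) (X : triangle) : triangle :=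
  foldr (fun j Y => omega j Y) X (iota 1 n.-1).

Definition GOGAm (n : nat) (X : triangle) : Prop :=
  GT n X /\ Magog n (S_op n X).

Definition pentagon_of (X : triangle) : 6.-tuple nat :=
  [tuple X 3 1; X 3 2; X 3 3; X 2 1; X 2 2; X 1 1].

Definition GogPentagon (n : nat) (P : 6.-tuple nat) : Prop :=
  exists X, Gog n X /\ pentagon_of X = P.

Definition GOGAmPentagon (n : nat) (P : 6.-tuple nat) : Prop :=
  exists X, GOGAm n X /\ pentagon_of X = P.

(* Main.v *)
Require Import Defs.
From mathcomp Require Import all_boot zify.
From Stdlib Require Import FunctionalExtensionality ProofIrrelevance.
Set Implicit Arguments. Unset Strict Implicit. Unset Printing Implicit Defensive.

Lemma s_op_other k X i j : i != k -> s_op k X i j = X i j.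
Proof. by rewrite /s_op => /negbTE ->. Qed.

Lemma omega_high m X i j : m < i -> omega m X i j = X i j.
Proof.
elim: m => [//|m IH] Hm /=.
rewrite s_op_other; last by lia.
apply: IH; lia.
Qed.

Lemma omega_frozen k m X i j : i <= k -> k <= m -> omega m X i j = omega k X i j.
Proof.
move=> Hik; elim: m => [|m IH] Hkm.
  by have -> : k = 0 by lia.
case: (ltnP k m.+1) => H.
  rewrite /= s_op_other; last by lia.
  apply: IH; lia.
by have -> : k = m.+1 by lia.
Qed.

Lemma foldr_high l X i j : all (fun m => m < i) l ->
  foldr (fun j Y => omega j Y) X l i j = X i j.
Proof.
elim: l => [//|m l IH] /= /andP [Hm Hl].
rewrite omega_high //; exact: IH.
Qed.

Lemma S_op_split n X : 3 <= n ->
  S_op n X = foldr (fun j Y => omega j Y) (omega (n-2) (omega (n-1) X)) (iota 1 (n-3)).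
Proof.
move=> Hn; rewrite /S_op.
have -> : n.-1 = (n-3) + 2 by lia.
rewrite iotaD foldr_cat.
have E : iota (1 + (n - 3)) 2 = [:: n-2; n-1].
  rewrite /=; congr (_ :: _ :: _); lia.
by rewrite E.
Qed.

Lemma iota_lt n i : n - 3 < i -> all (fun m => m < i) (iota 1 (n-3)).
Proof.
move=> H; apply/allP => m; rewrite mem_iota => /andP [_ ?]; lia.
Qed.

Lemma omega_diag1 Z : omega 1 Z 1 1 = Z 2 1 + Z 2 2 - Z 1 1.
Proof. by rewrite /= /s_op. Qed.

Lemma omega_diagS j Z : 2 <= j ->
  omega j Z j j = maxn (Z j.+1 j) (omega j.-1 Z j.-1 j.-1) + Z j.+1 j.+1 - Z j j.
Proof.
move=> Hj.
case: j Hj => [|j] // Hj /=.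
rewrite /s_op eqxx /= ltnSn Hj ltnn.
rewrite !(@omega_high j Z j.+2) // (@omega_high j Z j.+1) //.
Qed.

Lemma omega_diag_lb j Z : 1 <= j -> omega j Z j j + Z j j >= Z j.+1 j + Z j.+1 j.+1.
Proof.
move=> Hj; case: (ltnP 1 j) => H.
  rewrite omega_diagS //; lia.
have -> : j = 1 by lia.
rewrite omega_diag1; lia.
Qed.

Lemma omega_tele j m Z : 1 <= j -> j <= m ->
  omega m Z m m + Z j.+1 j.+1 >= omega j Z j j + Z m.+1 m.+1.
Proof.
move=> Hj; elim: m => [|m IH] Hjm; first lia.
case: (ltnP j m.+1) => H.
  have Hjm' : j <= m by lia.
  have IH' := IH Hjm'.
  rewrite (@omega_diagS m.+1); last by lia.
  rewrite /=; lia.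
have -> : j = m.+1 by lia. lia.
Qed.

Lemma omega_21 Z : omega 2 Z 2 1 = Z 3 1 + minn (Z 3 2) (omega 1 Z 1 1) - Z 2 1.
Proof.
by rewrite [omega 2 Z]/= /s_op /=.
Qed.


Ltac simpif := repeat match goal with |- context[if ?b then _ else _] =>
  first [ rewrite (_ : b = true); last by lia
        | rewrite (_ : b = false); last by lia
        | let h := fresh "h" in case: (boolP b) => h ] end.

Definition Ext (a1 a2 a3 b1 b2 c : nat) : triangle := fun i j =>
  if i == 1 then c else if i == 2 then (if j == 1 then b1 else b2)
  else if j + 3 <= i then 1 else if j + 2 == i then a1
  else if j + 1 == i then a2 else a3.
Definition NA (w1 u v : nat) : triangle := fun i j =>
  if i == 1 then w1 else if j + 2 <= i then 1 else if j + 1 == i then u else v.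
Definition NB (t : nat) : triangle := fun i j => if j + 1 <= i then 1 else t.
Definition One : triangle := fun i j => 1.
Definition Rep (N Z : triangle) (k : nat) : triangle := fun i j =>
  if (0 < j <= i) && (i <= k) then N i j else Z i j.

Lemma Rep0 N Z : Rep N Z 0 = Z.
Proof.
apply: functional_extensionality => i; apply: functional_extensionality => j.
rewrite /Rep; simpif; lia.
Qed.

Section A.
Variables a1 a2 a3 b1 b2 c w1 u v : nat.
Hypothesis H : [&& 0 < a1, a1 <= b1, b1 <= a2, a2 <= b2, b2 <= a3, b1 <= c & c <= b2].
Hypothesis hw : w1 = b1 + b2 - c.
Hypothesis hu : u = a1 + minn a2 w1 - b1.
Hypothesis hv : v = maxn a2 w1 + a3 - b2.

Lemma A_step k : s_op k.+1 (Rep (NA w1 u v) (Ext a1 a2 a3 b1 b2 c) k) =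
                 Rep (NA w1 u v) (Ext a1 a2 a3 b1 b2 c) k.+1.
Proof.
apply: functional_extensionality => i; apply: functional_extensionality => j.
rewrite /s_op /Rep /NA /Ext.
simpif; lia.
Qed.
End A.

Section B.
Variables (n a1 a2 a3 b1 b2 c w1 u v t : nat).
Hypothesis H : [&& 0 < a1, a1 <= b1, b1 <= a2, a2 <= b2, b2 <= a3, b1 <= c & c <= b2].
Hypothesis Hn : 3 <= n.
Hypothesis hf : [&& a1 <= u, u <= a2, a2 <= v, v <= a3, u <= w1 & w1 <= v].
Hypothesis ht : t = u + v - w1.

Let Z := Rep (NA w1 u v) (Ext a1 a2 a3 b1 b2 c) (n-1).
Let W := Rep (NB t) Z (n-2).

Lemma B_step k : k.+1 <= n - 2 -> s_op k.+1 (Rep (NB t) Z k) = Rep (NB t) Z k.+1.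
Proof.
move=> Hk.
apply: functional_extensionality => i; apply: functional_extensionality => j.
rewrite /s_op /Z /Rep /NB /NA /Ext.
simpif; lia.
Qed.

Lemma C_step k : k.+1 <= n - 3 -> s_op k.+1 (Rep One W k) = Rep One W k.+1.
Proof.
move=> Hk.
apply: functional_extensionality => i; apply: functional_extensionality => j.
rewrite /s_op /W /Z /Rep /One /NB /NA /Ext.
simpif; lia.
Qed.
End B.

Lemma omega_rep N Z K : (forall k, k < K -> s_op k.+1 (Rep N Z k) = Rep N Z k.+1) ->
  forall k, k <= K -> omega k Z = Rep N Z k.
Proof.
move=> Hs; elim=> [|k IH] Hk; first by rewrite Rep0.
by rewrite /= IH ?Hs //; lia.
Qed.

Lemma s_op_ones k Z : (forall i j, 0 < j <= i -> i <= k.+1 -> Z i j = 1) -> s_op k Z = Z.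
Proof.
move=> Ho.
apply: functional_extensionality => i; apply: functional_extensionality => j.
rewrite /s_op; case: ifP => // /andP [/eqP -> Hj].
case: (ltnP 1 j) => H2; case: (ltnP j k) => H3;
  rewrite !Ho; try lia.
Qed.

Lemma ones_fixed m Z : (forall i j, 0 < j <= i -> i <= m.+1 -> Z i j = 1) -> omega m Z = Z.
Proof.
elim: m => [//|m IH] Ho /=.
rewrite IH; last by move=> i j Hj Hi; apply: Ho; lia.
by apply: s_op_ones.
Qed.

Lemma foldr_ones l Z r : (forall i j, 0 < j <= i -> i <= r -> Z i j = 1) ->
  all (fun m => m < r) l -> foldr (fun j Y => omega j Y) Z l = Z.
Proof.
move=> Ho; elim: l => [//|m l IH] /= /andP [Hm Hl].
rewrite IH //; apply: ones_fixed => i j Hj Hi; apply: Ho; lia.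
Qed.

Definition Hc n a1 a2 a3 b1 b2 c : bool :=
  [&& 0 < a1, a1 <= b1, b1 <= a2, a2 <= b2, b2 <= a3, a3 <= n, b1 <= c, c <= b2,
      a1+a2+a3+2 <= n+b1+b2, a3+b1+1 <= n+c & a2+a3+1 <= n+b2].

Lemma Hc_GOGAm n a1 a2 a3 b1 b2 c : 3 <= n -> Hc n a1 a2 a3 b1 b2 c ->
  GOGAm n (Ext a1 a2 a3 b1 b2 c).
Proof.
move=> Hn HH.
have H : [&& 0 < a1, a1 <= b1, b1 <= a2, a2 <= b2, b2 <= a3, b1 <= c & c <= b2].
  by move: HH; rewrite /Hc; lia.
pose w1 := b1 + b2 - c.
pose u := a1 + minn a2 w1 - b1.
pose v := maxn a2 w1 + a3 - b2.
pose t := u + v - w1.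
have hf : [&& a1 <= u, u <= a2, a2 <= v, v <= a3, u <= w1 & w1 <= v].
  by move: HH; rewrite /Hc /u /v /w1; lia.
have hv' : v <= n - 1 by move: HH; rewrite /Hc /v /w1; lia.
have ht' : t <= n - 2 by move: HH; rewrite /Hc /t /u /v /w1; lia.
have ht1 : t = u + v - w1 by [].
have Ha3 : a3 <= n by move: HH; rewrite /Hc; lia.
pose E := Ext a1 a2 a3 b1 b2 c.
pose Z := Rep (NA w1 u v) E (n-1).
pose W := Rep (NB t) Z (n-2).
have HZ : omega (n-1) E = Z.
  apply: (@omega_rep _ _ (n-1)) => // k _; exact: A_step.
have HW : omega (n-2) Z = W.
  apply: (@omega_rep _ _ (n-2)) => // k Hk; apply: B_step => //; lia.
have HF : forall k, k <= n - 3 ->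
    foldr (fun j Y => omega j Y) W (iota 1 k) = Rep One W k.
  case=> [|k] Hk; first by rewrite Rep0.
  have -> : iota 1 k.+1 = iota 1 k ++ [:: k.+1] by rewrite -(addn1 k) iotaD /= add1n addn1.
  rewrite foldr_cat.
  have -> : foldr (fun j Y => omega j Y) W [:: k.+1] = omega k.+1 W by [].
  have HC : omega k.+1 W = Rep One W k.+1.
    apply: (@omega_rep One W (n-3)) => // k' Hk'; apply: C_step => //; lia.
  rewrite HC.
  apply: (@foldr_ones _ _ k.+1).
    move=> i j Hj Hi; rewrite /Rep /One; simpif; lia.
  apply/allP => m; rewrite mem_iota => /andP [_ ?]; lia.
have HS : S_op n E = Rep One W (n-3).
  by rewrite S_op_split // HZ HW HF.
split.
  rewrite /E /Ext; split.
    move=> i j *; simpif; lia.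
  move=> i j *; split; simpif; lia.
rewrite HS /W /Z /Rep /One /NB /NA /E /Ext; split; first split.
- move=> i j *; simpif; lia.
- move=> i j *; split; simpif; lia.
- move=> j *; simpif; lia.
Qed.



Lemma diag_chain n X i k : GT n X -> 1 <= i -> i + k <= n -> X i i <= X (i+k) (i+k).
Proof.
case=> Hpos Hint Hi; elim: k => [|k IH] Hk; first by rewrite addn0.
have := Hint (i+k) (i+k) ltac:(lia) (leqnn _) ltac:(lia).
rewrite addnS; have := IH ltac:(lia); lia.
Qed.

Lemma GOGAm_Hc n X : 3 <= n -> GOGAm n X ->
  Hc n (X 3 1) (X 3 2) (X 3 3) (X 2 1) (X 2 2) (X 1 1).
Proof.
move=> Hn [HGT [_ Hmag]].
have HGT' := HGT; case: HGT' => Hpos Hint.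
set Y := S_op n X.
set X' := omega (n-1) X.
have HYn : Y n n = X n n.
  rewrite /Y S_op_split // foldr_high; last by apply: iota_lt; lia.
  rewrite omega_high; last by lia.
  rewrite omega_high //; lia.
have HY1 : Y (n-1) (n-1) = X' (n-1) (n-1).
  rewrite /Y S_op_split // foldr_high; last by apply: iota_lt; lia.
  rewrite omega_high //; lia.
have HY2 : Y (n-2) (n-2) = omega (n-2) X' (n-2) (n-2).
  rewrite /Y S_op_split // foldr_high //; by apply: iota_lt; lia.
have M0 := Hmag n ltac:(lia) (leqnn _).
have M1 := Hmag (n-1) ltac:(lia) ltac:(lia).
have M2 := Hmag (n-2) ltac:(lia) ltac:(lia).
rewrite -/Y HYn in M0; rewrite -/Y HY1 in M1; rewrite -/Y HY2 in M2.
have C3 := diag_chain (i:=3) (k:=n-3) HGT ltac:(lia) ltac:(lia).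
rewrite (_ : 3 + (n - 3) = n) in C3; last by lia.
have T1 := omega_tele X (j:=2) (m:=n-1) ltac:(lia) ltac:(lia).
rewrite (_ : (n-1).+1 = n) in T1; last by lia.
have L2 := omega_diag_lb X (j:=2) ltac:(lia).
have T0 := omega_tele X (j:=1) (m:=n-1) ltac:(lia) ltac:(lia).
rewrite (_ : (n-1).+1 = n) in T0; last by lia.
rewrite omega_diag1 in T0.
have T2 := omega_tele X' (j:=1) (m:=n-2) ltac:(lia) ltac:(lia).
rewrite (_ : (n-2).+1 = n - 1) in T2; last by lia.
have L1 := omega_diag_lb X' (j:=1) (leqnn _).
have E11 : X' 1 1 = X 2 1 + X 2 2 - X 1 1.
  by rewrite /X' (@omega_frozen 1) //; lia.
have E21 : X' 2 1 = X 3 1 + minn (X 3 2) (X 2 1 + X 2 2 - X 1 1) - X 2 1.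
  by rewrite /X' (@omega_frozen 2) //; lia.
rewrite E11 E21 in L1.
rewrite -/X' in T1 T0.
have G1 := Hint 1 1 (leqnn _) (leqnn _) ltac:(lia).
have G2 := Hint 2 1 (leqnn _) ltac:(lia) ltac:(lia).
have G3 := Hint 2 2 ltac:(lia) (leqnn _) ltac:(lia).
have P1 := Hpos 3 1 (leqnn _) ltac:(lia) ltac:(lia).
rewrite /Hc; lia.
Qed.

Definition Gc n a1 a2 a3 b1 b2 c : bool :=
  [&& 0 < a1, a1 < a2, a2 < a3, a3 <= n, a1 <= b1, b1 <= a2, a2 <= b2,
      b2 <= a3, b1 < b2, b1 <= c & c <= b2].


Definition Xg (a1 a2 a3 b1 b2 c : nat) : triangle := fun i j =>
  if i == 1 then c else if i == 2 then (if j == 1 then b1 else b2)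
  else if j + 3 <= i then j else if j + 2 == i then maxn a1 j
  else if j + 1 == i then maxn a2 j else maxn a3 j.


Lemma Gc_Gog n a1 a2 a3 b1 b2 c : 3 <= n -> Gc n a1 a2 a3 b1 b2 c ->
  Gog n (Xg a1 a2 a3 b1 b2 c).
Proof.
rewrite /Gc /Xg => Hn H; split; first split.
- move=> i j *; simpif; lia.
- move=> i j *; split; simpif; lia.
split.
- move=> i j *; simpif; lia.
- move=> j *; simpif; lia.
Qed.

Lemma Gog_Gc n X : 3 <= n -> Gog n X ->
  Gc n (X 3 1) (X 3 2) (X 3 3) (X 2 1) (X 2 2) (X 1 1).
Proof.
move=> Hn [HGT [Hs Htop]].
have HGT' := HGT; case: HGT' => Hpos Hint.
have C3 := diag_chain (i:=3) (k:=n-3) HGT ltac:(lia) ltac:(lia).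
rewrite (_ : 3 + (n - 3) = n) in C3; last by lia.
have Tn := Htop n ltac:(lia) (leqnn _).
have G1 := Hint 1 1 (leqnn _) (leqnn _) ltac:(lia).
have G2 := Hint 2 1 (leqnn _) ltac:(lia) ltac:(lia).
have G3 := Hint 2 2 ltac:(lia) (leqnn _) ltac:(lia).
have P1 := Hpos 3 1 (leqnn _) ltac:(lia) ltac:(lia).
have S1 := Hs 3 1 (leqnn _) ltac:(lia) ltac:(lia).
have S2 := Hs 3 2 ltac:(lia) ltac:(lia) ltac:(lia).
have S3 := Hs 2 1 (leqnn _) ltac:(lia) ltac:(lia).
rewrite /Gc; lia.
Qed.


Definition mk6 (a b c d e f : nat) : 6.-tuple nat := [tuple a; b; c; d; e; f].


(* build from a1, d=n-a3 and gaps x1 x2 x3 y1 *)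
Definition mkH a1 d x1 x2 x3 y1 :=
  mk6 a1 (a1+x1+x2) (a1+x1+x2+x3+d) (a1+x1) (a1+x1+x2+x3) (a1+x1+y1).
Definition mkG a1 x1 x2 x3 x4 y1 :=
  mk6 a1 (a1+x1+x2) (a1+x1+x2+x3+x4) (a1+x1) (a1+x1+x2+x3) (a1+x1+y1).

Definition fN n a1 a2 a3 b1 b2 c :=
  let x1 := b1-a1 in let x2 := a2-b1 in let x3 := b2-a2 in let x4 := a3-b2 in
  let d := n-a3 in let y1 := c-b1 in let y2 := b2-c in
  if [&& 1 <= x2, 1 <= x3 & 2 <= y2] then mkH a1 d x1 (x2-1) (x3-1) y1
  else if x2 == 0 then mkH a1 d (x1-1) x4 x3 y1
  else if x3 == 0 then mkH a1 d (x4-1) x1 (x2+1) (x2-y1+1)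
  else if (y2 == 0) && (1 <= x4) then mkH a1 d x1 (x2+x4-1) x3 (x2+x3)
  else if y2 == 0 then mkH a1 d x3 (x1+x2-1) 0 x1
  else if 1 <= x4 then mkH a1 d x1 (x2+x4-1) (x3+1) (x2+x3+1)
  else mkH a1 d x3 (x1+x2-1) 1 (x1+1).

Definition gN n a1 a2 a3 b1 b2 c :=
  let X1 := b1-a1 in let X2 := a2-b1 in let X3 := b2-a2 in
  let u := n-a3 in let Y1 := c-b1 in
  if 2 <= u then mkG a1 X1 (X2+1) (X3+1) (u-2) Y1
  else if [&& u == 1, 1 <= X3 & Y1 <= X3] then mkG a1 (X1+1) 0 X3 X2 Y1
  else if (u == 1) && (1 <= X3) then mkG a1 X1 (Y1-X3) X3 (X2+X3+1-Y1) Y1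
  else if u == 1 then mkG a1 Y1 (X2-Y1+1) X1 0 (X2+1+X1-Y1)
  else if (2 <= X3) && (Y1 <= X3) then mkG a1 X2 (X3-1) 0 (X1+1) (X3-Y1)
  else if 2 <= X3 then mkG a1 X1 (Y1-X3) (X3-1) (X2+X3+1-Y1) (Y1-2)
  else mkG a1 (Y1-1) (X2+2-Y1) X1 0 (X1+X2+1-Y1).

Definition app6 {T} (F : nat -> nat -> nat -> nat -> nat -> nat -> T) (P : 6.-tuple nat) :=
  F (nth 0 P 0) (nth 0 P 1) (nth 0 P 2) (nth 0 P 3) (nth 0 P 4) (nth 0 P 5).

Lemma mk6_eq a b c d e f a' b' c' d' e' f' :
  a = a' -> b = b' -> c = c' -> d = d' -> e = e' -> f = f' ->
  mk6 a b c d e f = mk6 a' b' c' d' e' f'.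
Proof. by move=> -> -> -> -> -> ->. Qed.

Ltac splitif := repeat match goal with |- context[if ?b then _ else _] =>
   let h := fresh "h" in case: (boolP b) => h end.



Lemma fN_H n a1 a2 a3 b1 b2 c : Gc n a1 a2 a3 b1 b2 c ->
  app6 (Hc n) (fN n a1 a2 a3 b1 b2 c).
Proof.
rewrite /Gc /fN /app6 => H.
have [x1 E] : exists x, b1 = a1 + x by exists (b1 - a1); lia. subst b1.
have [x2 E] : exists x, a2 = a1 + x1 + x by exists (a2 - (a1 + x1)); lia. subst a2.
have [x3 E] : exists x, b2 = a1 + x1 + x2 + x by exists (b2 - (a1 + x1 + x2)); lia. subst b2.
have [x4 E] : exists x, a3 = a1 + x1 + x2 + x3 + x by exists (a3 - (a1 + x1 + x2 + x3)); lia. subst a3.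
have [d E] : exists x, n = a1 + x1 + x2 + x3 + x4 + x by exists (n - (a1 + x1 + x2 + x3 + x4)); lia. subst n.
have [y1 E] : exists x, c = a1 + x1 + x by exists (c - (a1 + x1)); lia. subst c.
rewrite ?addKn.
rewrite (_ : a1+x1+x2+x3 - (a1+x1+y1) = x2+x3-y1); last by lia.
splitif; rewrite /= /Hc; lia.
Qed.

Lemma gN_G n a1 a2 a3 b1 b2 c : Hc n a1 a2 a3 b1 b2 c ->
  app6 (Gc n) (gN n a1 a2 a3 b1 b2 c).
Proof.
rewrite /Hc /gN /app6 => H.
have [x1 E] : exists x, b1 = a1 + x by exists (b1 - a1); lia. subst b1.
have [x2 E] : exists x, a2 = a1 + x1 + x by exists (a2 - (a1 + x1)); lia. subst a2.
have [x3 E] : exists x, b2 = a1 + x1 + x2 + x by exists (b2 - (a1 + x1 + x2)); lia. subst b2.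
have [x4 E] : exists x, a3 = a1 + x1 + x2 + x3 + x by exists (a3 - (a1 + x1 + x2 + x3)); lia. subst a3.
have [d E] : exists x, n = a1 + x1 + x2 + x3 + x4 + x by exists (n - (a1 + x1 + x2 + x3 + x4)); lia. subst n.
have [y1 E] : exists x, c = a1 + x1 + x by exists (c - (a1 + x1)); lia. subst c.
rewrite ?addKn.
splitif; rewrite /= /Gc; lia.
Qed.

Lemma gf n a1 a2 a3 b1 b2 c : Gc n a1 a2 a3 b1 b2 c ->
  app6 (gN n) (fN n a1 a2 a3 b1 b2 c) = mk6 a1 a2 a3 b1 b2 c.
Proof.
rewrite /Gc /fN /app6 => H.
have [x1 E] : exists x, b1 = a1 + x by exists (b1 - a1); lia. subst b1.
have [x2 E] : exists x, a2 = a1 + x1 + x by exists (a2 - (a1 + x1)); lia. subst a2.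
have [x3 E] : exists x, b2 = a1 + x1 + x2 + x by exists (b2 - (a1 + x1 + x2)); lia. subst b2.
have [x4 E] : exists x, a3 = a1 + x1 + x2 + x3 + x by exists (a3 - (a1 + x1 + x2 + x3)); lia. subst a3.
have [d E] : exists x, n = a1 + x1 + x2 + x3 + x4 + x by exists (n - (a1 + x1 + x2 + x3 + x4)); lia. subst n.
have [y1 E] : exists x, c = a1 + x1 + x by exists (c - (a1 + x1)); lia. subst c.
rewrite ?addKn.
rewrite (_ : a1+x1+x2+x3 - (a1+x1+y1) = x2+x3-y1); last by lia.
splitif; rewrite /= /gN ?addKn; splitif; try (exfalso; lia); apply: mk6_eq; lia.
Qed.

Lemma fg n a1 a2 a3 b1 b2 c : Hc n a1 a2 a3 b1 b2 c ->
  app6 (fN n) (gN n a1 a2 a3 b1 b2 c) = mk6 a1 a2 a3 b1 b2 c.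
Proof.
rewrite /Hc /gN /app6 => H.
have [x1 E] : exists x, b1 = a1 + x by exists (b1 - a1); lia. subst b1.
have [x2 E] : exists x, a2 = a1 + x1 + x by exists (a2 - (a1 + x1)); lia. subst a2.
have [x3 E] : exists x, b2 = a1 + x1 + x2 + x by exists (b2 - (a1 + x1 + x2)); lia. subst b2.
have [x4 E] : exists x, a3 = a1 + x1 + x2 + x3 + x by exists (a3 - (a1 + x1 + x2 + x3)); lia. subst a3.
have [d E] : exists x, n = a1 + x1 + x2 + x3 + x4 + x by exists (n - (a1 + x1 + x2 + x3 + x4)); lia. subst n.
have [y1 E] : exists x, c = a1 + x1 + x by exists (c - (a1 + x1)); lia. subst c.
rewrite ?addKn.
splitif; rewrite /= /fN ?addKn; splitif; try (exfalso; lia); apply: mk6_eq; lia.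
Qed.


Lemma tuple6 (P : 6.-tuple nat) :
  P = mk6 (nth 0 P 0) (nth 0 P 1) (nth 0 P 2) (nth 0 P 3) (nth 0 P 4) (nth 0 P 5).
Proof.
case: P => [[|x0 [|x1 [|x2 [|x3 [|x4 [|x5 [|x6 s]]]]]]] Hs] //.
by apply: val_inj.
Qed.

Lemma sig_eq (T : Type) (Q : T -> Prop) (x y : {a | Q a}) :
  proj1_sig x = proj1_sig y -> x = y.
Proof.
case: x => a Ha; case: y => b Hb /= E; subst b.
by rewrite (proof_irrelevance _ Ha Hb).
Qed.

Lemma GogP_Gc n P : 3 <= n -> GogPentagon n P -> app6 (Gc n) P.
Proof. by move=> Hn [X [HX <-]]; apply: Gog_Gc. Qed.

Lemma GOGAmP_Hc n P : 3 <= n -> GOGAmPentagon n P -> app6 (Hc n) P.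
Proof. by move=> Hn [X [HX <-]]; apply: GOGAm_Hc. Qed.

Lemma Gc_GogP n a1 a2 a3 b1 b2 c : 3 <= n -> Gc n a1 a2 a3 b1 b2 c ->
  GogPentagon n (mk6 a1 a2 a3 b1 b2 c).
Proof.
move=> Hn H; exists (Xg a1 a2 a3 b1 b2 c); split; first exact: Gc_Gog.
move: H; rewrite /Gc /pentagon_of /Xg /= => H.
apply: mk6_eq; lia.
Qed.

Lemma Hc_GOGAmP n a1 a2 a3 b1 b2 c : 3 <= n -> Hc n a1 a2 a3 b1 b2 c ->
  GOGAmPentagon n (mk6 a1 a2 a3 b1 b2 c).
Proof.
move=> Hn H; exists (Ext a1 a2 a3 b1 b2 c); split; first exact: Hc_GOGAm.
by [].
Qed.

Lemma fmem n P : 3 <= n -> GogPentagon n P -> GOGAmPentagon n (app6 (fN n) P).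
Proof.
move=> Hn HP; have HG := GogP_Gc Hn HP.
have HH := fN_H HG.
rewrite [app6 (fN n) P]tuple6; exact: Hc_GOGAmP.
Qed.

Lemma gmem n P : 3 <= n -> GOGAmPentagon n P -> GogPentagon n (app6 (gN n) P).
Proof.
move=> Hn HP; have HH := GOGAmP_Hc Hn HP.
have HG := gN_G HH.
rewrite [app6 (gN n) P]tuple6; exact: Gc_GogP.
Qed.

Lemma gfP n P : 3 <= n -> GogPentagon n P -> app6 (gN n) (app6 (fN n) P) = P.
Proof.
move=> Hn HP; have HG := GogP_Gc Hn HP.
rewrite {2}[P]tuple6; exact: gf.
Qed.

Lemma fgP n P : 3 <= n -> GOGAmPentagon n P -> app6 (fN n) (app6 (gN n) P) = P.
Proof.
move=> Hn HP; have HH := GOGAmP_Hc Hn HP.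
rewrite {2}[P]tuple6; exact: fg.
Qed.

Unset Implicit Arguments.

Theorem mainTheorem3 (n : nat) (hn : 3 <= n) :
  exists f : {P : 6.-tuple nat | GogPentagon n P} ->
             {P : 6.-tuple nat | GOGAmPentagon n P},
    bijective f.
Proof.
exists (fun x => exist _ (app6 (fN n) (proj1_sig x)) (fmem hn (proj2_sig x))).
exists (fun y => exist _ (app6 (gN n) (proj1_sig y)) (gmem hn (proj2_sig y))).
- move=> [P HP]; apply: sig_eq => /=; exact: gfP.
- move=> [P HP]; apply: sig_eq => /=; exact: fgP.
Qed.
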